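(* Let $1\le M\le N$ be integers and let $i_1,\dots,i_N$, $j_1,\dots,j_N$, $k_1,\dots,k_M$, $l_1,\dots,l_M$ be mode indices. Then \begin{align*} &\langle\varphi_{i_1}\dots\varphi_{i_N}|\,a^\dagger_{k_1}\cdots a^\dagger_{k_M}a_{l_1}\cdots a_{l_M}\,|\varphi_{j_1}\dots\varphi_{j_N}\rangle\\ &=\frac{(N-M)!}{N!}(M!)^2\sum_{\substack{1\le\alpha_1<\dots<\alpha_M\le N\\ 1\le\beta_1<\dots<\beta_M\le N}}\delta_{k_1\dots k_M;\,i_{\alpha_1}\dots i_{\alpha_M}}\,\delta_{l_1\dots l_M;\,j_{\beta_1}\dots j_{\beta_M}}\,\delta_{\{i_1\dots i_N\}\setminus\{i_{\alpha_1}\dots i_{\alpha_M}\};\,\{j_1\dots j_N\}\setminus\{j_{\beta_1}\dots j_{\beta_M}\}} . \end{align*}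
   Context: Let $\{|\varphi_i\rangle\}$ be an orthonormal basis of a single-particle Hilbert space, and let $a_i,a_i^\dagger$ be the corresponding bosonic annihilation and creation operators on Fock space, satisfying $[a_i,a_j^\dagger]=\delta_{ij}$, $[a_i^\dagger,a_j^\dagger]=0$, $[a_i,a_j]=0$; $|0\rangle$ is the vacuum. Symmetrized $N$-particle states are $|\varphi_{i_1}\dots\varphi_{i_N}\rangle=\frac{1}{\sqrt{N!}}a_{i_1}^\dagger\cdots a_{i_N}^\dagger|0\rangle$. The permutation-invariant Kronecker delta of two index lists of equal length $L$ is $\delta_{i_1\dots i_L;j_1\dots j_L}:=\frac{1}{L!}\sum_{\sigma\in S_L}\prod_{k=1}^L\delta_{i_k j_{\sigma(k)}}$ (equal to $1$ for $L=0$). The list $\{i_1\dots i_N\}\setminus\{i_{\alpha_1}\dots i_{\alpha_M}\}$ is obtained from $i_1,\dots,i_N$ by removing the entries at positions $\alpha_1,\dots,\alpha_M$, and similarly for the $j$'s. *)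

(* Defs.v *)
(* Concrete model of the bosonic Fock space in the
   occupation-number basis.  A basis configuration
   is a multiset of modes, represented by a seq nat up to permutation
   (perm_eq); a Fock vector is a finite formal linear combination of
   configurations, represented as a seq of (coefficient, configuration). *)
From HB Require Import structures.
From mathcomp Require Import all_boot all_order all_algebra all_fingroup.
Set Implicit Arguments. Unset Strict Implicit. Unset Printing Implicit Defensive.
Import Order.TTheory GRing.Theory Num.Theory.
Local Open Scope ring_scope.

Definition fvec (R : rcfType) := seq (R * seq nat).

Definition adag (R : rcfType) (k : nat) (v : fvec R) : fvec R :=
  [seq (x.1 * Num.sqrt ((count_mem k x.2).+1)%:R, k :: x.2) | x <- v].

(* a_k |n> = sqrt(n_k) |n - e_k>  (coefficient 0 if n_k = 0) *)
Definition ann (R : rcfType) (k : nat) (v : fvec R) : fvec R :=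
  [seq (x.1 * Num.sqrt (count_mem k x.2)%:R, rem k x.2) | x <- v].

Definition vac (R : rcfType) : fvec R := [:: (1, [::])].

Definition fscale (R : rcfType) (c : R) (v : fvec R) : fvec R :=
  [seq (c * x.1, x.2) | x <- v].

(* inner product: occupation-number configurations are orthonormal;
   all coefficients are real here so no conjugation is needed *)
Definition fdot (R : rcfType) (u v : fvec R) : R :=
  \sum_(x <- u) \sum_(y <- v) x.1 * y.1 * (perm_eq x.2 y.2)%:R.

Definition adags (R : rcfType) (ks : seq nat) (v : fvec R) : fvec R :=
  foldr (@adag R) v ks.
Definition anns (R : rcfType) (ls : seq nat) (v : fvec R) : fvec R :=
  foldr (@ann R) v ls.

Definition sym_state (R : rcfType) (N : nat) (i : 'I_N -> nat) : fvec R :=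
  fscale (Num.sqrt (N`!)%:R)^-1 (adags [seq i a | a <- enum 'I_N] (vac R)).

Definition pdelta (R : rcfType) (s t : seq nat) : R :=
  let L := size s in
  ((L`!)%:R)^-1 *
    \sum_(sg : 'S_L) \prod_(q < L) (nth 0%N s q == nth 0%N t (sg q))%:R.

Definition sublist (N : nat) (i : 'I_N -> nat) (A : {set 'I_N}) : seq nat :=
  [seq i a | a <- enum A].

(* Main.v *)
Require Import Defs.
From HB Require Import structures.
From mathcomp Require Import all_boot all_order all_algebra all_fingroup.
From mathcomp Require Import ring zify.
Import Order.TTheory GRing.Theory Num.Theory.

Section Part1.
Set Implicit Arguments. Unset Strict Implicit.


Fixpoint F (s : seq nat) : nat := if s is x :: s' then (count_mem x s').+1 * F s' else 1.
Fixpoint Rm (ls u : seq nat) : seq nat := if ls is l :: ls' then rem l (Rm ls' u) else u.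
Fixpoint Fr (ls u : seq nat) : nat := if ls is l :: ls' then count_mem l (Rm ls' u) * Fr ls' u else 1.
Fixpoint Fa (ks u : seq nat) : nat := if ks is k :: ks' then (count_mem k (ks' ++ u)).+1 * Fa ks' u else 1.

Lemma F_gt0 s : 0 < F s.
Proof. by elim: s => //= x s IH; rewrite muln_gt0 IH. Qed.

Lemma F_prod s u : uniq u -> {subset s <= u} -> F s = \prod_(m <- u) (count_mem m s)`!.
Proof.
elim: s => [|x s IH] Uu Su /=.
  by rewrite big1_seq // => m _; rewrite count_pred0 /=.
have xu : x \in u by apply: Su; rewrite inE eqxx.
rewrite IH // => [|y ys]; last by apply: Su; rewrite inE ys orbT.
rewrite (bigD1_seq x) //= (bigD1_seq x (r := u)) //= eqxx add1n factS mulnA.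
congr (_ * _); apply: eq_bigr => m /negbTE mx.
by rewrite eq_sym mx.
Qed.

Lemma F_perm s t : perm_eq s t -> F s = F t.
Proof.
move=> st; have U := undup_uniq (s ++ t).
rewrite (F_prod U) ?(F_prod U) => [|y yt|y ys]; last 2 first.
- by rewrite mem_undup mem_cat yt orbT.
- by rewrite mem_undup mem_cat ys.
by apply: eq_bigr => m _; move/seq.permP: st => ->.
Qed.

Lemma F_rem x K : x \in K -> F K = count_mem x K * F (rem x K).
Proof.
move=> xK; rewrite (F_perm (perm_to_rem xK)) /=.
by rewrite (seq.permP (perm_to_rem xK)) /= eqxx add1n.
Qed.

Lemma FaF ks u : Fa ks u * F u = F (ks ++ u).
Proof. by elim: ks => [|k ks IH] /=; rewrite ?mul1n // -mulnA IH. Qed.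

Lemma Fr_perm ls u : Fr ls u != 0 -> perm_eq (ls ++ Rm ls u) u /\ Fr ls u * F (Rm ls u) = F u.
Proof.
elim: ls => [|l ls IH] /=; first by rewrite mul1n.
rewrite muln_eq0 negb_or => /andP[c0 /IH[P E]].
have lR : l \in Rm ls u by rewrite -has_pred1 has_count lt0n.
split.
  have Q : perm_eq (ls ++ Rm ls u) (ls ++ l :: rem l (Rm ls u)).
    by rewrite perm_cat2l perm_to_rem.
  rewrite -(permPr P) (permPr Q).
  apply/seq.permP => p; rewrite /= !count_cat /= addnCA //.
by rewrite -E (F_rem lR); ring.
Qed.

Lemma Fr_nz ls u D : perm_eq (ls ++ D) u -> Fr ls u != 0 /\ perm_eq (Rm ls u) D.
Proof.
elim: ls D => [|l ls IH] D /=; first by move=> P; rewrite perm_sym.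
move=> P.
have P' : perm_eq (ls ++ l :: D) u.
  by rewrite -(permPr P) -cat1s perm_catCA.
have [nz R'] := IH _ P'.
have lR : l \in Rm ls u by rewrite (perm_mem R') inE eqxx.
split.
  by rewrite muln_eq0 negb_or nz andbT -lt0n -has_count has_pred1.
by rewrite -(perm_cons l) -(permPr R') perm_sym perm_to_rem.
Qed.

End Part1.

Section Part2.
Set Implicit Arguments. Unset Strict Implicit.


Fixpoint bits n : seq bitseq :=
  if n is n'.+1 then [seq true :: m | m <- bits n'] ++ [seq false :: m | m <- bits n']
  else [:: [::]].

Lemma perm_nil_r (K : seq nat) : perm_eq K [::] = (K == [::]).
Proof. by case: K => // a K; apply/negbTE/negP => /perm_size. Qed.

Lemma perm_cons_rem x (K w : seq nat) : x \in K -> perm_eq K (x :: w) = perm_eq (rem x K) w.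
Proof. by move=> xK; rewrite (permPl (perm_to_rem xK)) perm_cons. Qed.

Lemma ML u : forall K D : seq nat,
  \sum_(m <- bits (size u))
     (perm_eq K (mask m u) * perm_eq (mask (map negb m) u) D * F K * F D)
  = perm_eq (K ++ D) u * F u.
Proof.
elim: u => [|x u IH] K D /=.
  rewrite big_cons big_nil addn0 /= !perm_nil_r.
  case: K => [|a K]; case: D => [|b D] //=; by rewrite perm_sym perm_nil_r ?mul0n ?muln0.
rewrite big_cat !big_map /=.
have T1 : \sum_(m <- bits (size u))
   (perm_eq K (x :: mask m u) * perm_eq (mask (map negb m) u) D * F K * F D)
   = count_mem x K * (perm_eq (K ++ D) (x :: u) * F u).
  have [xK|xK] := boolP (x \in K); last first.
    rewrite (count_memPn xK) mul0n big1_seq // => m _.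
    suff -> : perm_eq K (x :: mask m u) = false by [].
    by apply/negbTE/negP => /perm_mem /(_ x); rewrite inE eqxx (negbTE xK).
  have -> : perm_eq (K ++ D) (x :: u) = perm_eq (rem x K ++ D) u.
    have H : perm_eq (K ++ D) (x :: (rem x K ++ D)).
      by rewrite -cat_cons perm_cat2r perm_to_rem.
    by rewrite (permPl H) perm_cons.
  rewrite -IH big_distrr /=; apply: eq_bigr => m _.
  rewrite perm_cons_rem // (F_rem xK); ring.
have T2 : \sum_(m <- bits (size u))
   (perm_eq K (mask m u) * perm_eq (x :: mask (map negb m) u) D * F K * F D)
   = count_mem x D * (perm_eq (K ++ D) (x :: u) * F u).
  have [xD|xD] := boolP (x \in D); last first.
    rewrite (count_memPn xD) mul0n big1_seq // => m _.
    suff -> : perm_eq (x :: mask (map negb m) u) D = false by rewrite muln0.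
    by apply/negbTE/negP => /perm_mem /(_ x); rewrite inE eqxx (negbTE xD).
  have -> : perm_eq (K ++ D) (x :: u) = perm_eq (K ++ rem x D) u.
    have H : perm_eq (K ++ D) (x :: (K ++ rem x D)).
      apply: (@perm_trans _ (K ++ x :: rem x D)); first by rewrite perm_cat2l perm_to_rem.
      by apply/seq.permP => p; rewrite /= !count_cat /= addnCA.
    by rewrite (permPl H) perm_cons.
  rewrite -IH big_distrr /=; apply: eq_bigr => m _.
  rewrite [perm_eq (x :: _) _]perm_sym perm_cons_rem // [perm_eq (rem x D) _]perm_sym (F_rem xD); ring.
rewrite T1 T2 -mulnDl.
have [P|P] := boolP (perm_eq (K ++ D) (x :: u)); last by rewrite !mul0n muln0.
move/seq.permP: (P) => /(_ (pred1 x)); rewrite count_cat /= eqxx add1n => ->.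
by rewrite !mul1n.
Qed.

End Part2.

Section Part3.
Set Implicit Arguments. Unset Strict Implicit.



Lemma mem_bits n m : (m \in bits n) = (size m == n).
Proof.
elim: n m => [|n IH] [|b m] /=.
- by rewrite inE.
- by rewrite inE.
- by rewrite mem_cat; apply/negbTE; rewrite negb_or; apply/andP; split; apply/mapP => -[].
- rewrite mem_cat eqSS -IH; case: b.
    apply/idP/idP => [/orP[/mapP[y yb [->]] //|/mapP[y _ //]]|H].
    by apply/orP; left; apply/mapP; exists m.
  apply/idP/idP => [/orP[/mapP[y _ //]|/mapP[y yb [->]] //]|H].
  by apply/orP; right; apply/mapP; exists m.
Qed.

Lemma uniq_bits n : uniq (bits n).
Proof.
elim: n => //= n IH; rewrite cat_uniq !map_inj_uniq //; last 2 first.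
- by move=> x y [].
- by move=> x y [].
rewrite IH andbT; apply/hasPn => x /mapP[y _ ->]; apply/mapP => -[z _ //].
Qed.

Definition bitsOf N (A : {set 'I_N}) : bitseq := [seq a \in A | a <- enum 'I_N].

Lemma bitsOf_inj N : injective (@bitsOf N).
Proof.
move=> A B E; apply/setP => a.
have := congr1 (fun m => a \in mask m (enum 'I_N)) E.
by rewrite /bitsOf -!filter_mask !mem_filter /= -enumT mem_enum !andbT.
Qed.

Lemma sum_sets N (g : bitseq -> nat) :
  \sum_(A : {set 'I_N}) g (bitsOf A) = \sum_(m <- bits N) g m.
Proof.
rewrite -(big_map (@bitsOf N) xpredT g); apply: perm_big.
apply: uniq_perm; first by rewrite map_inj_uniq ?index_enum_uniq //; apply: bitsOf_inj.
  exact: uniq_bits.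
move=> m; rewrite mem_bits; apply/mapP/idP => [[A _ ->]|/eqP sm].
  by rewrite size_map size_enum_ord.
exists [set a : 'I_N | nth false m a]; first by rewrite mem_index_enum.
apply: (@eq_from_nth _ false); first by rewrite size_map size_enum_ord.
move=> q; rewrite sm => qN.
rewrite (nth_map (Ordinal qN)) ?size_enum_ord // inE nth_enum_ord //.
Qed.

Lemma sublist_mask N (i : 'I_N -> nat) A :
  sublist i A = mask (bitsOf A) [seq i a | a <- enum 'I_N].
Proof.
rewrite /sublist /bitsOf -map_mask -filter_mask; congr map.
by rewrite enumT /enum_mem; apply: eq_filter.
Qed.

Lemma bitsOfC N (A : {set 'I_N}) : bitsOf (~: A) = map negb (bitsOf A).
Proof. by rewrite /bitsOf -map_comp; apply: eq_map => a /=; rewrite in_setC. Qed.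

Lemma size_sublist N (i : 'I_N -> nat) A : size (sublist i A) = #|A|.
Proof. by rewrite size_map cardE. Qed.

End Part3.

Section Part4.
Set Implicit Arguments. Unset Strict Implicit.


Lemma count_sum_nth x (t : seq nat) : \sum_(p < size t) (x == nth 0 t p) = count_mem x t.
Proof.
elim: t => [|y t IH] /=; first by rewrite big_ord0.
by rewrite big_ord_recl /= -IH eq_sym; congr (_ + _); apply: eq_bigr => q _; rewrite lift0.
Qed.

Lemma sum_perm_lift n (f : 'S_n.+1 -> nat) :
  \sum_(sg : 'S_n.+1) f sg = \sum_(p : 'I_n.+1) \sum_(tau : 'S_n) f (lift_perm ord0 p tau).
Proof.
rewrite (partition_big (fun sg : 'S_n.+1 => sg ord0) xpredT) //=.
apply: eq_bigr => j0 _.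
pose i0 : 'I_n.+1 := ord0.
rewrite (reindex (lift_perm i0 j0)); last first.
  pose ulsf i (s : 'S_n.+1) k := odflt k (unlift (s i) (s (lift i k))).
  have ulsfK i (s : 'S_n.+1) k: lift (s i) (ulsf i s k) = s (lift i k).
    rewrite /ulsf; have:= neq_lift i k.
    by rewrite -(can_eq (permK s)) => /unlift_some[] ? ? ->.
  have inj_ulsf: injective (ulsf i0 _).
    move=> s; apply: can_inj (ulsf (s i0) s^-1%g) _ => k'.
    by rewrite {1}/ulsf ulsfK !permK liftK.
  exists (fun s => perm (inj_ulsf s)) => [s _ | s].
    by apply/permP=> k'; rewrite permE /ulsf lift_perm_lift lift_perm_id liftK.
  move/(s _ =P _) => si0; apply/permP=> k.
  case: (unliftP i0 k) => [k'|] ->; rewrite ?lift_perm_id //.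
  by rewrite lift_perm_lift -si0 permE ulsfK.
by apply: eq_bigl => tau; rewrite lift_perm_id eqxx.
Qed.

Definition dropAt p (t : seq nat) := take p t ++ drop p.+1 t.

Lemma size_dropAt p t : p < size t -> size (dropAt p t) = (size t).-1.
Proof. by move=> pt; rewrite size_cat size_take pt size_drop; lia. Qed.

Lemma nth_dropAt p t r : p < size t -> nth 0 (dropAt p t) r = nth 0 t (bump p r).
Proof.
move=> pt; rewrite nth_cat size_take pt /bump.
case: ltnP => [rp|pr].
  by rewrite nth_take // add0n.
by rewrite nth_drop; congr nth; lia.
Qed.

Lemma perm_dropAt p t : p < size t -> perm_eq t (nth 0 t p :: dropAt p t).
Proof.
move=> pt; rewrite -{1}(cat_take_drop p t) (drop_nth 0) //.
by apply/seq.permP => q; rewrite /dropAt /= !count_cat /= addnCA.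
Qed.

Lemma Wsum n : forall s t : seq nat, size s = n -> size t = n ->
  \sum_(sg : 'S_n) \prod_(q < n) (nth 0 s q == nth 0 t (sg q)) = perm_eq s t * F s.
Proof.
elim: n => [|n IH] s t.
  case: s => // _; case: t => // _.
  rewrite (eq_bigr (fun _ => 1)); last by move=> sg _; rewrite big_ord0.
  by rewrite sum1_card card_Sn.
case: s => // x s' /= [Hs] Ht.
rewrite sum_perm_lift.
have E : forall p : 'I_n.+1, \sum_(tau : 'S_n)
    \prod_(q < n.+1) (nth 0 (x :: s') q == nth 0 t (lift_perm ord0 p tau q))
    = (x == nth 0 t p) * (perm_eq (x :: s') t * F s').
  move=> p.
  have pt : p < size t by rewrite Ht.
  have -> : \sum_(tau : 'S_n)
    \prod_(q < n.+1) (nth 0 (x :: s') q == nth 0 t (lift_perm ord0 p tau q))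
    = (x == nth 0 t p) * \sum_(tau : 'S_n) \prod_(q < n) (nth 0 s' q == nth 0 (dropAt p t) (tau q)).
    rewrite big_distrr /=; apply: eq_bigr => tau _.
    rewrite big_ord_recl lift_perm_id /=; congr (_ * _).
    by apply: eq_bigr => q _; rewrite lift_perm_lift add0n nth_dropAt.
  rewrite IH //; last by rewrite size_dropAt // Ht.
  have [/eqP xp|] := boolP (x == nth 0 t p); last by rewrite !mul0n.
  by rewrite (permPr (perm_dropAt pt)) -xp perm_cons.
rewrite (eq_bigr _ (fun p _ => E p)) -big_distrl /= -Ht count_sum_nth.
have [P|P] := boolP (perm_eq (x :: s') t); last by rewrite !mul0n muln0.
by rewrite -(seq.permP P) /= eqxx add1n !mul1n.
Qed.

End Part4.

Section Part5.
Set Implicit Arguments. Unset Strict Implicit.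

Local Open Scope ring_scope.

Lemma PD (R : rcfType) (s t : seq nat) : size t = size s ->
  pdelta R s t = (perm_eq s t * F s)%:R / ((size s)`!)%:R.
Proof.
move=> st; rewrite /pdelta /= mulrC; congr (_ * _).
rewrite -(@Wsum (size s) s t erefl st) natr_sum; apply: eq_bigr => sg _; by rewrite natr_prod.
Qed.

Lemma sqM (R : rcfType) (x y : nat) :
  Num.sqrt (x%:R : R) * Num.sqrt (y%:R) = Num.sqrt ((x * y)%:R).
Proof. by rewrite natrM sqrtrM ?ler0n. Qed.

Lemma adags1 (R : rcfType) ks (c : R) u :
  adags ks [:: (c, u)] = [:: (c * Num.sqrt (Fa ks u)%:R, ks ++ u)].
Proof.
elim: ks => [|k ks IH] /=; first by rewrite sqrtr1 mulr1.
by rewrite /adags /= -/(adags ks _) IH /adag /= -mulrA sqM mulnC.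
Qed.

Lemma anns1 (R : rcfType) ls (c : R) u :
  anns ls [:: (c, u)] = [:: (c * Num.sqrt (Fr ls u)%:R, Rm ls u)].
Proof.
elim: ls => [|l ls IH] /=; first by rewrite sqrtr1 mulr1.
by rewrite /anns /= -/(anns ls _) IH /ann /= -mulrA sqM mulnC.
Qed.

Lemma fdot1 (R : rcfType) (a b : R) s t :
  fdot [:: (a, s)] [:: (b, t)] = a * b * (perm_eq s t)%:R.
Proof. by rewrite /fdot !big_cons !big_nil !addr0. Qed.

End Part5.

Section Part6.
Set Implicit Arguments. Unset Strict Implicit.


Definition gT (ii jj ks ls : seq nat) (m m' : bitseq) : nat :=
  perm_eq ks (mask m ii) * perm_eq ls (mask m' jj) *
  perm_eq (mask (map negb m) ii) (mask (map negb m') jj) *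
  F ks * F ls * F (mask (map negb m) ii).

Lemma S_inner N ii jj ks ls m : size jj = N ->
  \sum_(m' <- bits N) gT ii jj ks ls m m' =
  perm_eq ks (mask m ii) * F ks * (perm_eq (ls ++ mask (map negb m) ii) jj * F jj).
Proof.
move=> <-; rewrite -ML big_distrr /=; apply: eq_bigr => m' _.
rewrite /gT [perm_eq (mask _ ii) _]perm_sym; ring.
Qed.

Lemma S_nz N ii jj ks ls : size ii = N -> size jj = N -> Fr ls jj != 0 ->
  (\sum_(m <- bits N) \sum_(m' <- bits N) gT ii jj ks ls m m') * F (Rm ls jj)
  = perm_eq (ks ++ Rm ls jj) ii * F ii * F jj.
Proof.
move=> si sj nz; have [P _] := Fr_perm nz.
rewrite big_distrl /=.
rewrite (eq_bigr (fun m => (perm_eq ks (mask m ii) * perm_eq (mask (map negb m) ii) (Rm ls jj)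
     * F ks * F (Rm ls jj)) * F jj)); last first.
  move=> m _; rewrite (S_inner _ _ _ _ sj).
  have -> : perm_eq (ls ++ mask (map negb m) ii) jj = perm_eq (mask (map negb m) ii) (Rm ls jj).
    by rewrite -(permPr P) perm_cat2l.
  ring.
by rewrite -big_distrl /= -si ML mulnAC.
Qed.

Lemma S_z N ii jj ks ls : size jj = N -> Fr ls jj = 0 ->
  \sum_(m <- bits N) \sum_(m' <- bits N) gT ii jj ks ls m m' = 0.
Proof.
move=> sj z; apply: big1_seq => m _; rewrite (S_inner _ _ _ _ sj).
case P: (perm_eq _ jj); last by rewrite !muln0.
by have [] := Fr_nz P; rewrite z.
Qed.

End Part6.

Section Part7.
Set Implicit Arguments. Unset Strict Implicit.

Local Open Scope ring_scope.

Lemma fact_neq0 (R : rcfType) n : (n`!)%:R != 0 :> R.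
Proof. by rewrite pnatr_eq0 -lt0n fact_gt0. Qed.

Lemma RHS_eq (R : rcfType) (N M : nat) (hMN : (M <= N)%N)
  (i j : 'I_N -> nat) (k l : 'I_M -> nat) :
  ((N - M)`!)%:R / (N`!)%:R * ((M`!)%:R) ^+ 2 *
    \sum_(A : {set 'I_N} | #|A| == M) \sum_(B : {set 'I_N} | #|B| == M)
      pdelta R [seq k a | a <- enum 'I_M] (sublist i A) *
      pdelta R [seq l a | a <- enum 'I_M] (sublist j B) *
      pdelta R (sublist i (~: A)) (sublist j (~: B))
  = (N`!%:R)^-1 * (\sum_(m <- bits N) \sum_(m' <- bits N)
      gT [seq i a | a <- enum 'I_N] [seq j a | a <- enum 'I_N]
         [seq k a | a <- enum 'I_M] [seq l a | a <- enum 'I_M] m m')%:R.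
Proof.
set ii := [seq i a | a <- enum 'I_N]; set jj := [seq j a | a <- enum 'I_N].
set ks := [seq k a | a <- enum 'I_M]; set ls := [seq l a | a <- enum 'I_M].
have sk : size ks = M by rewrite size_map size_enum_ord.
have sl : size ls = M by rewrite size_map size_enum_ord.
pose T (A B : {set 'I_N}) : nat := (perm_eq ks (sublist i A) * perm_eq ls (sublist j B) *
  perm_eq (sublist i (~: A)) (sublist j (~: B)) * F ks * F ls * F (sublist i (~: A)))%N.
pose D : R := (M`!)%:R ^+ 2 * ((N - M)`!)%:R.
have cC : forall A : {set 'I_N}, #|A| = M -> #|~: A| = (N - M)%N.
  by move=> A hA; have := cardsC A; rewrite card_ord hA; lia.
rewrite (eq_bigr (fun A => \sum_(B : {set 'I_N} | #|B| == M) (T A B)%:R / D)); last first.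
  move=> A /eqP hA; apply: eq_bigr => B /eqP hB.
  rewrite !PD ?size_sublist ?sk ?sl ?hA ?hB ?cC //.
  rewrite /T /D !natrM; field.
  by rewrite !fact_neq0.
under eq_bigr do rewrite -mulr_suml.
rewrite -mulr_suml.
have E : \sum_(A : {set 'I_N} | #|A| == M) \sum_(B : {set 'I_N} | #|B| == M) ((T A B)%:R : R)
   = (\sum_(A : {set 'I_N} | #|A| == M) \sum_(B : {set 'I_N} | #|B| == M) T A B)%:R.
  by rewrite natr_sum; apply: eq_bigr => A _; rewrite natr_sum.
rewrite E.
have -> : (\sum_(A : {set 'I_N} | #|A| == M) \sum_(B : {set 'I_N} | #|B| == M) T A B =
          \sum_(A : {set 'I_N}) \sum_(B : {set 'I_N}) T A B)%N.
  rewrite big_mkcond; apply: eq_bigr => A _; rewrite big_mkcond /=.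
  case: eqP => hA.
    apply: eq_bigr => B _; case: eqP => hB //.
    rewrite /T (_ : perm_eq ls (sublist j B) = false) ?muln0 ?mul0n //.
    by apply/negP => /perm_size; rewrite size_sublist sl => E0; apply: hB.
  symmetry; apply: big1 => B _.
  rewrite /T (_ : perm_eq ks (sublist i A) = false) ?muln0 ?mul0n //.
  by apply/negP => /perm_size; rewrite size_sublist sk => E0; apply: hA.
have -> : (\sum_(A : {set 'I_N}) \sum_(B : {set 'I_N}) T A B =
    \sum_(m <- bits N) \sum_(m' <- bits N) gT ii jj ks ls m m')%N.
  rewrite -(@sum_sets N (fun m => \sum_(m' <- bits N) gT ii jj ks ls m m')).
  apply: eq_bigr => A _.
  rewrite -(@sum_sets N (fun m' => gT ii jj ks ls (bitsOf A) m')).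
  apply: eq_bigr => B _.
  by rewrite /T /gT !sublist_mask !bitsOfC.
rewrite /D; field.
by rewrite !fact_neq0.
Qed.

End Part7.

Section Part8.
Set Implicit Arguments. Unset Strict Implicit.

Local Open Scope ring_scope.

Lemma Fa0 s : Fa s [::] = F s.
Proof. by have := FaF s [::]; rewrite cats0 /= muln1. Qed.

Lemma LHS_eq (R : rcfType) (N M : nat) (i j : 'I_N -> nat) (k l : 'I_M -> nat) :
  fdot (sym_state R i)
       (adags [seq k a | a <- enum 'I_M]
          (anns [seq l a | a <- enum 'I_M] (sym_state R j)))
  = (N`!%:R)^-1 * Num.sqrt ((F [seq i a | a <- enum 'I_N] * F [seq j a | a <- enum 'I_N]
       * Fr [seq l a | a <- enum 'I_M] [seq j a | a <- enum 'I_N]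
       * Fa [seq k a | a <- enum 'I_M] (Rm [seq l a | a <- enum 'I_M] [seq j a | a <- enum 'I_N]))%N%:R)
    * (perm_eq [seq i a | a <- enum 'I_N]
         ([seq k a | a <- enum 'I_M] ++ Rm [seq l a | a <- enum 'I_M] [seq j a | a <- enum 'I_N]))%:R.
Proof.
rewrite /sym_state /vac !adags1 /fscale /= anns1 adags1 fdot1 !cats0 !Fa0.
set sq := Num.sqrt (N`!%:R : R).
have sq2 : sq * sq = N`!%:R by rewrite -expr2 sqr_sqrtr ?ler0n.
rewrite -!sqM -sq2 invfM.
set a := Num.sqrt _; set b := Num.sqrt _; set c := Num.sqrt _; set d := Num.sqrt _.
ring.
Qed.

End Part8.

Unset Implicit Arguments. Set Strict Implicit.
Local Open Scope ring_scope.

Theorem lemma2 (R : rcfType) (N M : nat) (hM1 : (1 <= M)%N) (hMN : (M <= N)%N)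
  (i j : 'I_N -> nat) (k l : 'I_M -> nat) :
  fdot (sym_state R i)
       (adags [seq k a | a <- enum 'I_M]
          (anns [seq l a | a <- enum 'I_M] (sym_state R j)))
  = ((N - M)`!)%:R / (N`!)%:R * ((M`!)%:R) ^+ 2 *
    \sum_(A : {set 'I_N} | #|A| == M) \sum_(B : {set 'I_N} | #|B| == M)
      pdelta R [seq k a | a <- enum 'I_M] (sublist i A) *
      pdelta R [seq l a | a <- enum 'I_M] (sublist j B) *
      pdelta R (sublist i (~: A)) (sublist j (~: B)).
Proof.
rewrite LHS_eq RHS_eq //.
set ii := [seq i a | a <- enum 'I_N]; set jj := [seq j a | a <- enum 'I_N].
set ks := [seq k a | a <- enum 'I_M]; set ls := [seq l a | a <- enum 'I_M].
have si : size ii = N by rewrite size_map size_enum_ord.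
have sj : size jj = N by rewrite size_map size_enum_ord.
set S := (\sum_(m <- bits N) _)%N.
rewrite -mulrA; congr (_ * _).
have [rz|rz] := eqVneq (Fr ls jj) 0%N.
  rewrite /S (@S_z N ii jj ks ls sj rz) rz muln0 mul0n sqrtr0 mul0r //.
have [P E] := Fr_perm rz.
have HS := @S_nz N ii jj ks ls si sj rz; rewrite -/S in HS.
case Pp: (perm_eq ii (ks ++ Rm ls jj)); rewrite perm_sym Pp in HS; last first.
  rewrite mulr0; move: HS; rewrite !mul0n => /eqP; rewrite muln_eq0.
  by rewrite (negbTE (lt0n_neq0 (F_gt0 _))) orbF => /eqP ->.
have Fii : F ii = (Fa ks (Rm ls jj) * F (Rm ls jj))%N by rewrite (F_perm Pp) -FaF.
have Sv : S = (Fa ks (Rm ls jj) * Fr ls jj * F (Rm ls jj))%N.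
  apply/eqP; rewrite -(eqn_pmul2r (F_gt0 (Rm ls jj))) HS mul1n Fii -E; apply/eqP; ring.
rewrite mulr1 Fii -E Sv.
set c := Fa _ _; set r := Fr _ _; set f := F _.
rewrite (_ : (c * f * (r * f) * r * c = (c * r * f) ^ 2)%N); last by ring.
by rewrite natrX sqrtr_sqr normr_nat.
Qed.
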